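(* Let $n$ and $0<n_1<\cdots<n_d<n$ be integers with $m_1=n_1$, $m_k=n_k-n_{k-1}$ ($2\le k\le d$), $m_{d+1}=n-n_d$, and regard $\mathrm{Flag}(n_1,\dots,n_d;n)=\{(VJ_1V^{\mathsf T},\dots,VJ_dV^{\mathsf T}):V\in\mathrm{O}(n)\}$ as a submanifold of $(\mathbb{R}^{n\times n})^d$ with the Frobenius inner product. Let $V(t)$ be a differentiable curve in $\mathrm{O}(n)$, $\Lambda(t)=V(t)^{\mathsf T}\dot V(t)\in\mathfrak{so}(n)$, with $\Lambda(p,p)(t)\equiv0$ for $p=1,\dots,d+1$, let $c(t)=V(t)(J_1,\dots,J_d)V(t)^{\mathsf T}$ and \[ T_3(t)=V(t)\big(\Lambda(t)J_1\Lambda(t),\dots,\Lambda(t)J_d\Lambda(t)\big)V(t)^{\mathsf T}. \] Then the orthogonal projection of $T_3(t)$ onto $\mathbb{T}_{c(t)}\mathrm{Flag}(n_1,\dots,n_d;n)$ equals $V(t)(X_1,\dots,X_d)V(t)^{\mathsf T}$, where each $X_k$ is a symmetric matrix whose $(p,q)$ block vanishes for every $(p,q)$ other than $(k,d+1)$ and $(d+1,k)$. Moreover, writing $\Lambda(t)=\begin{bmatrix}\Lambda_0(t)&\Lambda_1(t)\\-\Lambda_1(t)^{\mathsf T}&0\end{bmatrix}$ with $\Lambda_0(t)\in\mathfrak{so}(n-m_{d+1})$ and $\Lambda_1(t)\in\mathbb{R}^{(n-m_{d+1})\times m_{d+1}}$, one has \[ \begin{bmatrix}X_1(1,d+1)\\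 \vdots\\ X_d(d,d+1)\end{bmatrix}=-\Lambda_0(t)\Lambda_1(t). \]
   Context: $J_k=\operatorname{diag}(-I_{m_1},\dots,-I_{m_{k-1}},I_{m_k},-I_{m_{k+1}},\dots,-I_{m_{d+1}})$. $V(X_1,\dots,X_d)V^{\mathsf T}$ denotes $(VX_1V^{\mathsf T},\dots,VX_dV^{\mathsf T})$. For an $n\times n$ matrix $M$, $M(p,q)$ denotes its $(p,q)$ block in the partition $n=m_1+\cdots+m_{d+1}$. *)

(* Defs.v *)
From HB Require Import structures.
From mathcomp Require Import all_boot all_order all_algebra.
From mathcomp Require Import all_classical all_reals all_analysis.
Set Implicit Arguments. Unset Strict Implicit. Unset Printing Implicit Defensive.
Import Order.TTheory GRing.Theory Num.Theory.
Import numFieldNormedType.Exports.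
Local Open Scope ring_scope.

(* Partition n = m_1 + ... + m_{d+1} given by the thresholds
   ns : 'I_d -> nat, where ns k is the paper's n_{k+1} (0-based index k).  Block p (0-based)
   is the paper's block p+1; block d is the paper's block d+1. *)
Definition blk (d n : nat) (ns : 'I_d -> nat) (i : 'I_n) : nat :=
  #|[set k : 'I_d | (ns k <= i)%N]|.

(* J_k (paper's J_{k+1} for k : 'I_d): diagonal, +1 on block k, -1 elsewhere *)
Definition Jmx (R : realType) (d n : nat) (ns : 'I_d -> nat) (k : 'I_d)
  : 'M[R]_n :=
  \matrix_(i, j) (if i == j then (if blk ns i == k then 1 else -1) else 0).

Arguments Jmx R {d n} ns k.

Definition is_orthogonal_mx (R : realType) (n : nat) (V : 'M[R]_n) : Prop :=
  V^T *m V = 1%:M.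

Definition in_flag (R : realType) (d n : nat) (ns : 'I_d -> nat)
  (X : 'I_d -> 'M[R]_n) : Prop :=
  exists V : 'M[R]_n, is_orthogonal_mx V /\ forall k, X k = V *m Jmx R ns k *m V^T.

Definition frob (R : realType) (d n : nat) (A B : 'I_d -> 'M[R]_n) : R :=
  \sum_(k < d) \sum_(i < n) \sum_(j < n) A k i j * B k i j.

Definition tangent_flag (R : realType) (d n : nat) (ns : 'I_d -> nat)
  (c0 Y : 'I_d -> 'M[R]_n) : Prop :=
  exists c : R -> 'I_d -> 'M[R]_n,
    (forall s, in_flag ns (c s)) /\ c 0 = c0 /\
    (forall k, derivable (fun s => c s k) 0 1) /\
    (forall k, 'D_1 (fun s => c s k) 0 = Y k).

Definition is_orth_proj (R : realType) (d n : nat)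
  (S : ('I_d -> 'M[R]_n) -> Prop) (x y : 'I_d -> 'M[R]_n) : Prop :=
  S y /\ forall z, S z -> frob (fun k => x k - y k) z = 0.

(* Main.v *)
Require Import Defs.
From HB Require Import structures.
From mathcomp Require Import all_boot all_order all_algebra.
From mathcomp Require Import all_classical all_reals all_analysis.
From mathcomp Require Import zify ring lra.
Set Implicit Arguments. Unset Strict Implicit. Unset Printing Implicit Defensive.
Import Order.TTheory GRing.Theory Num.Theory.
Import numFieldNormedType.Exports.
Local Open Scope ring_scope.

Section Helpers.
Variable R : realType.
Lemma derivable_mulmx m p q (A : R -> 'M[R]_(m,p)) (B : R -> 'M[R]_(p,q)) t :
  derivable A t 1 -> derivable B t 1 -> derivable (fun s => A s *m B s) t 1.
Proof.
move=> /derivable_mxP dA /derivable_mxP dB; apply/derivable_mxP => i j.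
have -> : (fun x => (A x *m B x) i j) =
   \sum_(l < p) (fun x => A x i l * B x l j).
  by apply/funext => x; rewrite fct_sumE mxE.
apply: derivable_sum => l.
exact: (derivableM (dA i l) (dB l j)).
Qed.

Lemma derive_mulmx m p q (A : R -> 'M[R]_(m,p)) (B : R -> 'M[R]_(p,q)) t :
  derivable A t 1 -> derivable B t 1 ->
  'D_1 (fun s => A s *m B s) t = 'D_1 A t *m B t + A t *m 'D_1 B t.
Proof.
move=> dA dB; rewrite derive_mx; last exact: derivable_mulmx.
rewrite (derive_mx dA) (derive_mx dB).
move/derivable_mxP: dA => dA; move/derivable_mxP: dB => dB.
apply/matrixP => i j; rewrite !mxE.
have -> : (fun x => (A x *m B x) i j) =
   \sum_(l < p) (fun x => A x i l * B x l j).
  by apply/funext => x; rewrite fct_sumE mxE.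
rewrite derive_sum; last by move=> l; exact: (derivableM (dA i l) (dB l j)).
rewrite -big_split /=; apply: eq_bigr => l _; rewrite !mxE.
etransitivity; first exact: (deriveM (dA i l) (dB l j)).
by rewrite addrC; congr (_ + _); apply: mulrC.
Qed.

Lemma derivable_trmx m p (A : R -> 'M[R]_(m,p)) t :
  derivable A t 1 -> derivable (fun s => (A s)^T) t 1.
Proof.
move=> /derivable_mxP dA; apply/derivable_mxP => i j.
have -> : (fun x => (A x)^T i j) = (fun x => A x j i).
  by apply/funext => x; rewrite mxE.
exact: dA.
Qed.

Lemma derive_trmx m p (A : R -> 'M[R]_(m,p)) t :
  derivable A t 1 -> 'D_1 (fun s => (A s)^T) t = ('D_1 A t)^T.
Proof.
move=> dA; rewrite derive_mx; last exact: derivable_trmx.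
rewrite (derive_mx dA); apply/matrixP => i j; rewrite !mxE.
have -> : (fun x => (A x)^T i j) = (fun x => A x j i).
  by apply/funext => x; rewrite mxE.
by [].
Qed.

Lemma affine_der (a b x : R) :
  derivable (fun s : R => a + s * b) x 1 /\ 'D_1 (fun s : R => a + s * b) x = b.
Proof.
have h1 : derivable (fun s : R => s * b) x 1.
  by apply: (derivableM (f:=id) (g:=cst b)); [exact: derivable_id | exact: derivable_cst].
have h0 : derivable (fun s : R => a) x 1 by exact: derivable_cst.
split; first exact: (derivableD h0 h1).
etransitivity; first exact: (deriveD h0 h1).
have -> : 'D_1 (fun s : R => a) x = 0 by exact: derive_cst.
rewrite add0r.
have E : (fun s : R => s * b) = ((@id R) * cst b)%R by apply/funext.
rewrite E deriveM; [|exact: derivable_id|exact: derivable_cst].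
rewrite derive_id.
have -> : 'D_1 (cst b) x = 0 by exact: derive_cst.
by rewrite /= scaler0 add0r /GRing.scale /= mulr1.
Qed.

Lemma affine_mx m p (M N : 'M[R]_(m,p)) t :
  derivable (fun s : R => M + s *: N) t 1 /\ 'D_1 (fun s : R => M + s *: N) t = N.
Proof.
have E : forall i j, (fun s : R => (M + s *: N) i j) = (fun s => M i j + s * N i j).
  by move=> i j; apply/funext => s; rewrite !mxE.
have D : derivable (fun s : R => M + s *: N) t 1.
  by apply/derivable_mxP => i j; rewrite E; exact: (affine_der _ _ _).1.
split => //; rewrite derive_mx //; apply/matrixP => i j; rewrite mxE E.
exact: (affine_der _ _ _).2.
Qed.

End Helpers.
Section Cay.
Variable R : realType.
Variable n : nat.
Variable W : 'M[R]_n.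
Hypothesis hW : W^T = - W.

Definition Amx (s : R) : 'M[R]_n := 1%:M - s *: W.

Lemma unitA s : Amx s \in unitmx.
Proof.
rewrite -row_free_unit; apply/inj_row_free => v Hv.
have e1 : v = s *: (v *m W).
  by move/eqP: Hv; rewrite /Amx mulmxBr mulmx1 subr_eq0 -scalemxAr => /eqP.
set w := v *m W *m v^T.
have wT : w^T = - w by rewrite /w !trmx_mul trmxK hW mulNmx mulmxN mulmxA.
have w0 : w = 0.
  apply/matrixP => i j; rewrite !ord1 mxE.
  have := congr1 (fun M : 'M[R]_1 => M 0 0) wT; rewrite /= !mxE => h.
  by apply/eqP; rewrite -[_ == 0](@mulrn_eq0 _ _ 2) mulr2n {1}h addNr.
have vv : v *m v^T = 0 by rewrite {1}e1 -scalemxAl -/w w0 scaler0.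
apply/rowP => j; rewrite mxE.
have := congr1 (fun M : 'M[R]_1 => M 0 0) vv; rewrite /= !mxE => h.
have : forall k, k \in predT -> v 0 k * v 0 k = 0.
  apply/psumr_eq0P; last first.
    by move: h; under eq_bigr do rewrite mxE.  
  by move=> k _; rewrite -expr2 sqr_ge0.
by move/(_ j isT)/eqP; rewrite mulf_eq0 orbb => /eqP.
Qed.


Definition Bmx (s : R) : 'M[R]_n := invmx (Amx s).
Definition Pmx (s : R) : 'M[R]_n := 1%:M + s *: W.
Definition Qmx (s : R) : 'M[R]_n := Pmx s *m Bmx s.

Lemma PT s : (Pmx s)^T = Amx s.
Proof. by rewrite /Pmx /Amx linearD /= linearZ /= trmx1 hW scalerN. Qed.

Lemma AP s : Amx s *m Pmx s = Pmx s *m Amx s.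
Proof.
rewrite /Amx /Pmx; set a := s *: W.
rewrite mulmxBl mulmxDl !mul1mx !mulmxDr !mulmx1 mulmxN.
by rewrite opprD addrA addrK addrA addrNK.
Qed.

Lemma Q_orth s : (Qmx s)^T *m Qmx s = 1%:M.
Proof.
rewrite /Qmx trmx_mul PT.
transitivity ((Bmx s)^T *m (Pmx s *m (Amx s *m Bmx s))).
  by rewrite [Pmx s *m (Amx s *m _)]mulmxA -AP !mulmxA.
rewrite /Bmx (mulmxV (unitA s)) mulmx1 -[Pmx s]trmxK -trmx_mul PT.
by rewrite (mulmxV (unitA s)) trmx1.
Qed.

Lemma Q0 : Qmx 0 = 1%:M.
Proof. by rewrite /Qmx /Pmx /Bmx /Amx !scale0r subr0 addr0 invmx1 mulmx1. Qed.


Definition Apoly : 'M[{poly R}]_n :=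
  \matrix_(i, j) (((i == j)%:R)%:P - 'X * (W i j)%:P).

Lemma Amap s : map_mx (horner_eval s) Apoly = Amx s.
Proof. by apply/matrixP => i j; rewrite !mxE /horner_eval !hornerE. Qed.

Lemma Bentry s i j :
  Bmx s i j = ((\det Apoly).[s])^-1 * (\adj Apoly i j).[s].
Proof.
rewrite /Bmx /invmx unitA mxE -Amap det_map_mx -map_mx_adj mxE.
by rewrite /horner_eval.
Qed.

Lemma derivable_B : derivable Bmx 0 1.
Proof.
apply/derivable_mxP => i j.
have -> : (fun x => Bmx x i j) =
   ((fun x => ((horner (\det Apoly)) x)^-1) * horner (\adj Apoly i j))%R.
  by apply/funext => x; rewrite Bentry.
have h0 : horner (\det Apoly) 0 != 0.
  have -> : horner (\det Apoly) 0 = \det (Amx 0).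
    by rewrite -Amap det_map_mx.
  by rewrite /Amx scale0r subr0 det1 oner_eq0.
apply: derivableM; last exact: derivable_horner.
apply: derivableV => //; exact: derivable_horner.
Qed.

Lemma dA : derivable Amx 0 1 /\ 'D_1 Amx 0 = - W.
Proof.
have E : Amx = (fun s => 1%:M + s *: (- W)).
  by apply/funext => s; rewrite /Amx scalerN.
rewrite E; exact: affine_mx.
Qed.

Lemma dP : derivable Pmx 0 1 /\ 'D_1 Pmx 0 = W.
Proof. exact: affine_mx. Qed.

Lemma dB : 'D_1 Bmx 0 = W.
Proof.
have E : (fun s => Amx s *m Bmx s) = (fun _ => 1%:M).
  by apply/funext => s; rewrite /Bmx (mulmxV (unitA s)).
have := derive_mulmx dA.1 derivable_B; rewrite E.
have -> : 'D_1 (fun _ : R => (1%:M : 'M[R]_n)) 0 = 0 by exact: derive_cst.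
rewrite dA.2 /Bmx /Amx scale0r subr0 invmx1 mulmx1 mul1mx.
by move/eqP; rewrite eq_sym addrC subr_eq0 => /eqP.
Qed.

Lemma dQ : derivable Qmx 0 1 /\ 'D_1 Qmx 0 = W + W.
Proof.
split; first exact: derivable_mulmx dP.1 derivable_B.
rewrite (derive_mulmx dP.1 derivable_B) dP.2 dB.
by rewrite /Bmx /Pmx /Amx !scale0r subr0 addr0 invmx1 mulmx1 mul1mx.
Qed.

End Cay.

Lemma cayley_curve (R : realType) n (Om : 'M[R]_n) : Om^T = - Om ->
  exists Q : R -> 'M[R]_n, (forall s, (Q s)^T *m Q s = 1%:M) /\ (Q 0 = 1%:M) /\
    derivable Q 0 1 /\ 'D_1 Q 0 = Om.
Proof.
move=> hO; set W := (2^-1 : R) *: Om.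
have hW : W^T = - W by rewrite /W linearZ /= hO scalerN.
exists (Qmx W); split; first exact: Q_orth.
split; first exact: Q0.
have [d1 d2] := dQ hW; split => //; rewrite d2 /W -scalerDl.
by rewrite [X in X *: _ = _](_ : _ = 1) ?scale1r // [RHS](splitr 1) mul1r.
Qed.

Section Blk.
Variable R : realType.
Variables (d n : nat) (ns : 'I_d -> nat).

Definition jsg (k : 'I_d) (i : 'I_n) : R := if blk ns i == k then 1 else -1.

Lemma blk_le (i : 'I_n) : (blk ns i <= d)%N.
Proof. by rewrite /blk; apply: leq_trans (max_card _) _; rewrite card_ord. Qed.

Lemma mulJr m (M : 'M[R]_(m, n)) k i j : (M *m Jmx R ns k) i j = M i j * jsg k j.
Proof.
rewrite mxE (bigD1 j) //= big1 ?addr0 => [|l /negbTE nl]; rewrite !mxE ?eqxx //.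
by rewrite nl mulr0.
Qed.

Lemma mulJl m (M : 'M[R]_(n, m)) k i j : (Jmx R ns k *m M) i j = jsg k i * M i j.
Proof.
rewrite mxE (bigD1 i) //= big1 ?addr0 => [|l /negbTE nl]; rewrite !mxE ?eqxx //.
by rewrite eq_sym nl mul0r.
Qed.

End Blk.

Section Main2.
Variable R : realType.
Variables (d n : nat) (ns : 'I_d -> nat).
Variable Lam : 'M[R]_n.
Hypothesis hL0 : forall i j, blk ns i = blk ns j -> Lam i j = 0.
Hypothesis hsk : Lam^T = - Lam.

Definition Sm i j := \sum_(l : 'I_n | (blk ns l < d)%N) Lam i l * Lam l j.
Definition Pm i j := \sum_(l : 'I_n) Lam i l * Lam l j.
Definition Xm (k : 'I_d) : 'M[R]_n := \matrix_(i, j)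
  (if (blk ns i == k) && (blk ns j == d) then - Sm i j
   else if (blk ns i == d) && (blk ns j == k) then - Sm j i else 0).
Definition Omm : 'M[R]_n := \matrix_(i, j)
  (if (blk ns i < d)%N && (blk ns j == d) then Sm i j / 2
   else if (blk ns i == d) && (blk ns j < d)%N then - Sm j i / 2 else 0).

Ltac cases := repeat (case: eqP => ?) ; repeat (case: ltnP => ?); rewrite /= ?andbF ?andbT ?andTb ?andFb //; try (exfalso; lia).

Lemma Xsym k : (Xm k)^T = Xm k.
Proof.
apply/matrixP => i j; rewrite !mxE.
have kd := ltn_ord k.
move: (blk ns i) (blk ns j) => a b.
cases.
Qed.


Lemma Xzero (k : 'I_d) (i j : 'I_n) : ~ ((blk ns i = k /\ blk ns j = d) \/ (blk ns i = d /\ blk ns j = k)) ->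
  Xm k i j = 0.
Proof.
rewrite mxE; have kd := ltn_ord k.
move: (blk ns i) (blk ns j) => a b H.
cases; exfalso; apply: H; by [left|right].
Qed.

Lemma Xval (k : 'I_d) (i j : 'I_n) : blk ns i = k -> blk ns j = d -> Xm k i j = - Sm i j.
Proof. by rewrite mxE => -> ->; rewrite !eqxx. Qed.

Lemma Omskew : Omm^T = - Omm.
Proof.
apply/matrixP => i j; rewrite !mxE.
have := blk_le ns i; have := blk_le ns j.
move: (blk ns i) (blk ns j) => a b ha hb.
cases; rewrite ?oppr0 ?opprK ?mulNr //. all: try lra.
Qed.

Lemma subE (A B : 'M[R]_n) i j : (A - B) i j = A i j - B i j.
Proof. by rewrite !mxE. Qed.

Lemma OmJ k : Omm *m Jmx R ns k - Jmx R ns k *m Omm = Xm k.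
Proof.
apply/matrixP => i j; rewrite subE mulJr mulJl !mxE /jsg.
have kd := ltn_ord k.
have := blk_le ns i; have := blk_le ns j.
move: (blk ns i) (blk ns j) => a b ha hb.
cases; lra.
Qed.


Lemma Afact (k : 'I_d) (i j : 'I_n) : blk ns i = k \/ blk ns j = k ->
  (Lam *m Jmx R ns k *m Lam) i j = - Pm i j.
Proof.
move=> H; rewrite mxE /Pm -sumrN; apply: eq_bigr => r _; rewrite mulJr /jsg.
case: eqP => hr; last by rewrite mulrN1 mulNr.
case: H => H.
  by rewrite (hL0 (i:=i) (j:=r)) ?H ?hr // !mul0r oppr0.
by rewrite (hL0 (i:=r) (j:=j)) ?H ?hr // !mulr0 oppr0.
Qed.

Lemma Sfact (i j : 'I_n) : blk ns j = d -> Sm i j = Pm i j.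
Proof.
move=> hj; rewrite /Pm [RHS](bigID (fun l => (blk ns l < d)%N)) /= [X in _ = _ + X]big1 ?addr0 // => l hl.
have hl' : blk ns l = d.
  by apply/eqP; rewrite eqn_leq blk_le leqNgt hl.
by rewrite (hL0 (i:=l) (j:=j)) ?hl' ?hj // mulr0.
Qed.

Lemma hs (a b : 'I_n) : Lam a b = - Lam b a.
Proof. by have := congr1 (fun M : 'M[R]_n => M b a) hsk; rewrite /= !mxE => <-. Qed.

Lemma Psym (i j : 'I_n) : Pm i j = Pm j i.
Proof.
rewrite /Pm; apply: eq_bigr => l _.
by rewrite (hs i l) (hs l j) mulrNN mulrC.
Qed.

Lemma key (Zp : 'I_d -> 'M[R]_n)
  (E1 : forall k i j, Zp k i j * (jsg R ns k j + jsg R ns k i) = 0)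
  (E2 : forall k l i j, k != l ->
      Zp k i j * (jsg R ns l j + 1) + (jsg R ns k i + 1) * Zp l i j = 0)
  (i j : 'I_n) :
  \sum_(k < d) (Lam *m Jmx R ns k *m Lam - Xm k) i j * Zp k i j = 0.
Proof.
have Zz : forall (k : 'I_d) (i j : 'I_n), (blk ns i == k) = (blk ns j == k) -> Zp k i j = 0.
  move=> k i0 j0 e; have := E1 k i0 j0; rewrite /jsg e.
  by case: ifP => _ /eqP; rewrite mulf_eq0 => /orP[/eqP//|]; lra.
case: (blk ns i =P blk ns j) => pq.
  by apply: big1 => k _; rewrite Zz ?mulr0 // pq.
have hi := blk_le ns i; have hj := blk_le ns j.
have [pd|pd] := ltnP (blk ns i) d.
  pose k1 := Ordinal pd; rewrite (bigD1 k1) //=.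
  have [qd|qd] := ltnP (blk ns j) d.
    pose k2 := Ordinal qd; rewrite (bigD1 k2) /=; last first.
      by apply/eqP => /(congr1 val) /= h; apply: pq.
    rewrite big1 ?addr0; last first.
      move=> k /andP[nk2 nk1]; rewrite Zz ?mulr0 //.
      have -> : (blk ns i == k) = false.
        by apply/eqP => h; move/eqP: nk2; apply; apply: val_inj; rewrite /= h.
      have -> : (blk ns j == k) = false.
        by apply/eqP => h; move/eqP: nk1; apply; apply: val_inj; rewrite /= h.
      by [].
    rewrite !subE !Xzero; first last.
    - by move=> [[_ h]|[h _]]; lia.
    - by move=> [[_ h]|[h _]]; lia.
    rewrite (@Afact k1); last by left.
    rewrite (@Afact k2); last by right.
    have := E2 k1 k2 i j; rewrite /jsg /= !eqxx.
    have -> : (k1 != k2) = true by apply/eqP => /(congr1 val) /= h; apply: pq.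
    move/(_ isT) => h.
    have -> : Zp k2 i j = - Zp k1 i j by lra.
    by rewrite !subr0 mulrN addrN.
  have qd' : blk ns j = d by apply/eqP; rewrite eqn_leq hj qd.
  rewrite big1 ?addr0; last first.
    move=> k nk1; rewrite Zz ?mulr0 //.
    case: eqP => h1; first by exfalso; move/eqP: nk1; apply; apply: val_inj.
    by rewrite qd'; case: eqP => // h2; have := ltn_ord k; lia.
  rewrite subE (@Xval k1) // (@Afact k1); last by left.
  by rewrite Sfact // subrr mul0r.
have pd' : blk ns i = d by apply/eqP; rewrite eqn_leq hi pd.
have qd : (blk ns j < d)%N by rewrite ltn_neqAle hj andbT; apply/eqP => h; apply: pq; rewrite h.
pose k2 := Ordinal qd; rewrite (bigD1 k2) //=.
rewrite big1 ?addr0; last first.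
  move=> k nk2; rewrite Zz ?mulr0 //.
  case: (blk ns j =P k) => h1; first by exfalso; move/eqP: nk2; apply; apply: val_inj.
  by rewrite pd'; case: eqP => // h2; have := ltn_ord k; lia.
rewrite subE (@Afact k2); last by right.
rewrite mxE pd' /=.
have -> : (d == k2) = false by rewrite /= gtn_eqF.
rewrite eqxx /= eqxx /= Sfact // Psym.
by rewrite opprK addNr mul0r.
Qed.

End Main2.

Section Fin.
Variable R : realType.

Lemma frob_tr n (A B : 'M[R]_n) :
  \sum_(i < n) \sum_(j < n) A i j * B i j = \tr (A^T *m B).
Proof.
rewrite /mxtrace exchange_big; apply: eq_bigr => j _; rewrite mxE.
by apply: eq_bigr => i _; rewrite mxE.
Qed.

Lemma frob_conj n (V0 M Z : 'M[R]_n) :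
  \sum_(i < n) \sum_(j < n) (V0 *m M *m V0^T) i j * Z i j =
  \sum_(i < n) \sum_(j < n) M i j * (V0^T *m Z *m V0) i j.
Proof.
rewrite !frob_tr !trmx_mul !trmxK.
by rewrite -[in LHS]mulmxA (mxtrace_mulC V0) !mulmxA.
Qed.

Lemma frame n (V0 M M' A B : 'M[R]_n) : V0^T *m V0 = 1%:M ->
  V0^T *m (M *m (V0 *m A *m V0^T) + (V0 *m B *m V0^T) *m M') *m V0 =
  (V0^T *m M *m V0) *m A + B *m (V0^T *m M' *m V0).
Proof.
move=> hO; rewrite mulmxDr mulmxDl; congr (_ + _).
  by rewrite -!mulmxA hO mulmx1 !mulmxA.
by rewrite !mulmxA hO mul1mx.
Qed.

Lemma addc n (f : R -> 'M[R]_n) (M : 'M[R]_n) t : derivable f t 1 ->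
  derivable (fun s => f s + M) t 1 /\ 'D_1 (fun s => f s + M) t = 'D_1 f t.
Proof.
move=> df; have E : (fun s => f s + M) = (f + cst M) by apply/funext.
have dc : derivable (cst M) t 1 by exact: derivable_cst.
rewrite E; split; first exact: derivableD.
by rewrite deriveD // derive_cst addr0.
Qed.


Section Fl.
Variables (d n : nat) (ns : 'I_d -> nat).
Local Notation J k := (@Jmx R d n ns k).

Lemma JJ k : J k *m J k = 1%:M.
Proof.
apply/matrixP => i j; rewrite mulJl !mxE /jsg.
by case: (i =P j) => _; rewrite ?mulr0 //; case: ifP => _; rewrite ?mulr1 ?mulrN1 ?opprK.
Qed.

Lemma J1J1 k l : k != l -> (J k + 1%:M) *m (J l + 1%:M) = 0.
Proof.
move=> kl; apply/matrixP => i j.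
rewrite mulmxDl mul1mx mxE mulJl !mxE /jsg.
case: (i =P j) => [ij|nij]; last by case: ifP => _; rewrite /=; lra.
rewrite ij /=.
case: (blk ns j =P k) => hk; case: (blk ns j =P l) => hl; rewrite /=; try lra.
by exfalso; move/eqP: kl; apply; apply: val_inj => /=; rewrite -hk -hl.
Qed.

Variable W : 'M[R]_n.
Hypothesis hW : W^T *m W = 1%:M.

Lemma eW (X : 'M[R]_n) : W^T *m (W *m X) = X.
Proof. by rewrite mulmxA hW mul1mx. Qed.

Lemma flag_sq k : (W *m J k *m W^T) *m (W *m J k *m W^T) = 1%:M.
Proof.
rewrite -!mulmxA eW (mulmxA (J k)) JJ mul1mx.
exact: mulmx1C.
Qed.

Lemma flag_p1 k : W *m J k *m W^T + 1%:M = W *m (J k + 1%:M) *m W^T.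
Proof. by rewrite mulmxDr mulmxDl mulmx1 (mulmx1C hW). Qed.

Lemma flag_pp k l : k != l ->
  (W *m J k *m W^T + 1%:M) *m (W *m J l *m W^T + 1%:M) = 0.
Proof.
move=> kl; rewrite !flag_p1 -!mulmxA eW (mulmxA (J k + 1%:M)) J1J1 //.
by rewrite mul0mx mulmx0.
Qed.

End Fl.
End Fin.

Unset Implicit Arguments.
Theorem lemma3p8 (R : realType) (n d : nat) (ns : 'I_d -> nat)
  (hd : (0 < d)%N)
  (hns_pos : forall k : 'I_d, (0 < ns k)%N)
  (hns_lt : forall k : 'I_d, (ns k < n)%N)
  (hns_inc : forall j k : 'I_d, (j < k)%N -> (ns j < ns k)%N)
  (V : R -> 'M[R]_n)
  (hVorth : forall t, is_orthogonal_mx (V t))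
  (hVder : forall t, derivable V t 1)
  (hLdiag : forall t (i j : 'I_n), blk ns i = blk ns j ->
      ((V t)^T *m 'D_1 V t) i j = 0) :
  forall t : R,
    let Lam := (V t)^T *m 'D_1 V t in
    let c := fun k : 'I_d => V t *m Jmx R ns k *m (V t)^T in
    let T3 := fun k : 'I_d => V t *m (Lam *m Jmx R ns k *m Lam) *m (V t)^T in
    exists X : 'I_d -> 'M[R]_n,
      (forall k, (X k)^T = X k) /\
      (forall (k : 'I_d) (i j : 'I_n), ~ ((blk ns i = k /\ blk ns j = d) \/
                                 (blk ns i = d /\ blk ns j = k)) ->
          X k i j = 0) /\
      is_orth_proj (tangent_flag ns c) T3 (fun k => V t *m X k *m (V t)^T) /\
      (forall (k : 'I_d) (i j : 'I_n), blk ns i = k -> blk ns j = d ->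
          X k i j = - \sum_(l : 'I_n | (blk ns l < d)%N) Lam i l * Lam l j).
Proof.
move=> t Lam c T3.
have hO : (V t)^T *m V t = 1%:M := hVorth t.
have hO' : V t *m (V t)^T = 1%:M := mulmx1C hO.
have hL0 : forall i j : 'I_n, blk ns i = blk ns j -> Lam i j = 0 := hLdiag t.
have hsk : Lam^T = - Lam.
  have E : (fun s => (V s)^T *m V s) = (fun _ => 1%:M).
    by apply/funext => s; exact: hVorth.
  have := derive_mulmx (derivable_trmx (hVder t)) (hVder t).
  rewrite E (derive_trmx (hVder t)).
  have -> : 'D_1 (fun _ : R => (1%:M : 'M[R]_n)) t = 0 by exact: derive_cst.
  have -> : ('D_1 V t)^T *m V t = Lam^T by rewrite /Lam trmx_mul trmxK.
  by move/eqP; rewrite eq_sym addr_eq0 => /eqP.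
exists (Xm ns Lam).
split; first exact: Xsym.
split; first by move=> k i j; exact: Xzero.
split; last by move=> k i j hi hj; rewrite (Xval Lam hi hj).
have addE : forall (A B : 'M[R]_n) i j, (A + B) i j = A i j + B i j.
  by move=> *; rewrite !mxE.
split.
  have [Q [Qo [Q0 [Qd QD]]]] := cayley_curve (Omskew ns Lam).
  pose G := fun s => V t *m Q s.
  have dV : derivable (fun _ : R => V t) 0 1 by exact: derivable_cst.
  have dG : derivable G 0 1 by exact: derivable_mulmx dV Qd.
  have DG : 'D_1 G 0 = V t *m Omm ns Lam.
    rewrite /G (derive_mulmx dV Qd) QD.
    have -> : 'D_1 (fun _ : R => V t) 0 = 0 by exact: derive_cst.
    by rewrite mul0mx add0r.
  have G0 : G 0 = V t by rewrite /G Q0 mulmx1.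
  exists (fun s k => G s *m Jmx R ns k *m (G s)^T).
  split.
    move=> s; exists (G s); split => //.
    by rewrite /is_orthogonal_mx /G trmx_mul -mulmxA (mulmxA (V t)^T) hO mul1mx Qo.
  split; first by apply/funext => k; rewrite G0.
  have dJ : forall k, derivable (fun _ : R => Jmx R (n:=n) ns k) 0 1.
    by move=> k; exact: derivable_cst.
  have dGJ : forall k, derivable (fun s => G s *m Jmx R (n:=n) ns k) 0 1.
    by move=> k; exact: derivable_mulmx dG (dJ k).
  have dGT : derivable (fun s => (G s)^T) 0 1 by exact: derivable_trmx.
  split; first by move=> k; exact: derivable_mulmx (dGJ k) dGT.
  move=> k.
  rewrite (derive_mulmx (dGJ k) dGT) (derive_mulmx dG (dJ k)) (derive_trmx dG) DG G0.
  have -> : 'D_1 (fun _ : R => Jmx R (n:=n) ns k) 0 = 0 by exact: derive_cst.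
  rewrite mulmx0 addr0 trmx_mul Omskew mulNmx mulmxN.
  rewrite -(OmJ ns Lam k) mulmxBr mulmxBl !mulmxA.
  by [].
move=> z [cz [hin [h0 [hder hD]]]].
pose J k := Jmx R (n:=n) ns k.
have F1 : forall s k, cz s k *m cz s k = 1%:M.
  by move=> s k; have [W [hW ->]] := hin s; exact: flag_sq.
have F2 : forall s k l, k != l -> (cz s k + 1%:M) *m (cz s l + 1%:M) = 0.
  by move=> s k l kl; have [W [hW hc]] := hin s; rewrite !hc; exact: flag_pp.
have c0 : forall k, cz 0 k = V t *m J k *m (V t)^T by move=> k; rewrite h0.
have G1 : forall k, z k *m (V t *m J k *m (V t)^T) + (V t *m J k *m (V t)^T) *m z k = 0.
  move=> k.
  have E : (fun s => cz s k *m cz s k) = (fun _ => 1%:M) by apply/funext => s; exact: F1.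
  have := derive_mulmx (hder k) (hder k); rewrite E hD c0.
  have -> : 'D_1 (fun _ : R => (1%:M : 'M[R]_n)) 0 = 0 by exact: derive_cst.
  by move=> ->.
have G2 : forall k l, k != l ->
    z k *m (V t *m (J l + 1%:M) *m (V t)^T) + (V t *m (J k + 1%:M) *m (V t)^T) *m z l = 0.
  move=> k l kl.
  have [d1 D1] := addc (1%:M) (hder k).
  have [d2 D2] := addc (1%:M) (hder l).
  have E : (fun s => (cz s k + 1%:M) *m (cz s l + 1%:M)) = (fun _ => 0).
    by apply/funext => s; exact: F2.
  have := derive_mulmx d1 d2; rewrite E D1 D2 !hD !c0.
  have -> : 'D_1 (fun _ : R => (0 : 'M[R]_n)) 0 = 0 by exact: derive_cst.
  by rewrite !(flag_p1 _ hO) => ->.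
pose Zp k := (V t)^T *m z k *m V t.
have E1 : forall k i j, Zp k i j * (jsg R ns k j + jsg R ns k i) = 0.
  move=> k i j; have := frame (z k) (z k) (J k) (J k) hO.
  rewrite G1 mulmx0 mul0mx => /(congr1 (fun M : 'M[R]_n => M i j)).
  rewrite mxE addE mulJr mulJl => e.
  by rewrite mulrDr [Zp k i j * jsg R ns k i]mulrC -e.
have E2 : forall k l i j, k != l ->
    Zp k i j * (jsg R ns l j + 1) + (jsg R ns k i + 1) * Zp l i j = 0.
  move=> k l i j kl; have := frame (z k) (z l) (J l + 1%:M) (J k + 1%:M) hO.
  rewrite (G2 _ _ kl) mulmx0 mul0mx => /(congr1 (fun M : 'M[R]_n => M i j)).
  rewrite mulmxDr mulmxDl mulmx1 mul1mx mxE !addE mulJr mulJl => e.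
  by rewrite [RHS]e /Zp; ring.
rewrite /frob.
have E : forall k, T3 k - V t *m Xm ns Lam k *m (V t)^T =
    V t *m (Lam *m J k *m Lam - Xm ns Lam k) *m (V t)^T.
  by move=> k; rewrite mulmxBr mulmxBl.
under eq_bigr => k _ do rewrite E frob_conj.
rewrite exchange_big; apply: big1 => i _; rewrite exchange_big; apply: big1 => j _.
exact: (key hL0 hsk E1 E2 i j).
Qed.
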